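(* Let $a,b$ be even elements of a (graded, right) pre-Lie algebra and let $N\ge1$. Then $$[\cdots[[a,b],b],\dots,b]\ (N\text{ copies of }b)\;=\;\sum_{i=0}^{N}(-1)^i\binom{N}{i}\Big(\cdots\big((b^{[i]}\circ a)\circ b\big)\circ\cdots\Big)\circ b,$$ where in the $i$-th summand $b$ is applied on the right $N-i$ times, $b^{[i]}=(\cdots(b\circ b)\circ\cdots)\circ b$ ($i$ factors), and the $i=0$ term $b^{[0]}\circ a$ is to be read as $a$.
   Context: A (graded, right) pre-Lie algebra is a graded module with a product $\circ$ of degree $0$ such that $(x\circ y)\circ z-x\circ(y\circ z)$ is graded symmetric in $y,z$, and $[x,y]=x\circ y-(-1)^{|x||y|}y\circ x$. ''Even'' refers to this grading. *)

(* Defs.v *)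
From HB Require Import structures.
From mathcomp Require Import all_boot all_order all_algebra.
Set Implicit Arguments. Unset Strict Implicit. Unset Printing Implicit Defensive.
Import Order.TTheory GRing.Theory Num.Theory.
Local Open Scope ring_scope.

Definition ksign (R : comNzRingType) (m n : int) : R := (-1) ^+ (absz (m * n)).

(* A graded (right) pre-Lie algebra over the commutative ring R:
   - V is an R-module, hom d is the set of homogeneous elements of degree d
     (each hom d a submodule);
   - comp is R-bilinear of degree 0;
   - (x o y) o z - x o (y o z) is graded symmetric in homogeneous y, z. *)
Definition is_graded_preLie (R : comNzRingType) (V : lmodType R)
    (comp : V -> V -> V) (hom : int -> pred V) : Prop :=
  [/\ [/\ (forall d, 0 \in hom d),
          (forall d x y, x \in hom d -> y \in hom d -> x + y \in hom d)
        & (forall d (r : R) x, x \in hom d -> r *: x \in hom d)],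
      (forall (r : R) x y z,
          comp (r *: x + y) z = r *: comp x z + comp y z
       /\ comp z (r *: x + y) = r *: comp z x + comp z y),
      (forall m n x y, x \in hom m -> y \in hom n -> comp x y \in hom (m + n))
    & (forall m n x y z, y \in hom m -> z \in hom n ->
          comp (comp x y) z - comp x (comp y z)
          = ksign R m n *: (comp (comp x z) y - comp x (comp z y)))].

Definition gbr (R : comNzRingType) (V : lmodType R) (comp : V -> V -> V)
    (x y : V) (dx dy : int) : V :=
  comp x y - ksign R dx dy *: comp y x.

Fixpoint lbr_iter (R : comNzRingType) (V : lmodType R) (comp : V -> V -> V)
    (x : V) (dx : int) (b : V) (db : int) (N : nat) : V :=
  match N with
  | 0 => x
  | n.+1 => lbr_iter comp (gbr comp x b dx db) (dx + db) b db n
  end.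

Definition rcomp_iter (V : Type) (comp : V -> V -> V) (b : V) (k : nat) (x : V) : V :=
  iter k (fun y => comp y b) x.

Definition bpow (V : Type) (comp : V -> V -> V) (b : V) (i : nat) : V :=
  rcomp_iter comp b i.-1 b.

Definition bpow_comp (V : Type) (comp : V -> V -> V) (b a : V) (i : nat) : V :=
  if i == 0%N then a else comp (bpow comp b i) a.

(* Main.v *)
Require Import Defs.
From HB Require Import structures.
From mathcomp Require Import all_boot all_order all_algebra.
Import Order.TTheory GRing.Theory Num.Theory.
Local Open Scope ring_scope.

Lemma ev_add (m n : int) : ~~ odd (absz m) -> ~~ odd (absz n) -> ~~ odd (absz (m + n)).
Proof. rewrite -!dvdn2 => h1 h2. have: (2 %| m + n)%Z by apply: rpredD. by []. Qed.

Lemma ksign_ev (R : comNzRingType) (m n : int) : ~~ odd (absz m) -> ksign R m n = 1.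
Proof. by rewrite /ksign -signr_odd abszM oddM => /negbTE ->. Qed.

Lemma pascal (R : comNzRingType) (W : lmodType R) (g : nat -> nat -> W) n :
  \sum_(i < n.+1) (-1) ^+ i *: (g (n.+1 - i)%N i *+ 'C(n, i))
  - \sum_(i < n.+1) (-1) ^+ i *: (g (n - i)%N i.+1 *+ 'C(n, i))
  = \sum_(i < n.+2) (-1) ^+ i *: (g (n.+1 - i)%N i *+ 'C(n.+1, i)).
Proof.
rewrite big_ord_recl [in RHS]big_ord_recl /= !subn0 !bin0.
under [in RHS]eq_bigr => i _ do
  rewrite /bump /= add1n subSS binS mulrnDr scalerDr.
rewrite big_split /= addrA; congr (_ + _).
  rewrite [in RHS]big_ord_recr /= bin_small // mulr0n scaler0 addr0.
  by congr (_ + _); apply: eq_bigr => i _; rewrite /bump /= add1n subSS.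
rewrite (big_morph _ (@opprD _) (@oppr0 _)); apply: eq_bigr => i _.
by rewrite exprS mulN1r scaleNr.
Qed.

Theorem lemma7p9 (R : comNzRingType) (V : lmodType R) (comp : V -> V -> V)
    (hom : int -> pred V) (Hgpl : is_graded_preLie comp hom)
    (a b : V) (p q : int) (Ha : a \in hom p) (Hb : b \in hom q)
    (Hp : ~~ odd (absz p)) (Hq : ~~ odd (absz q)) (N : nat) (HN : (1 <= N)%N) :
  lbr_iter comp a p b q N
  = \sum_(i < N.+1)
      ((-1) ^+ i *: (rcomp_iter comp b (N - i) (bpow_comp comp b a i) *+ 'C(N, i))).
Proof.
case: Hgpl => [[H0 HD HZ] Hlin Hdeg Hpl].
have compDl x y z : comp (x + y) z = comp x z + comp y z.
  by have := proj1 (Hlin 1 x y z); rewrite !scale1r => ->.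
have compDr x y z : comp z (x + y) = comp z x + comp z y.
  by have := proj2 (Hlin 1 x y z); rewrite !scale1r => ->.
have comp0l z : comp 0 z = 0.
  have := proj1 (Hlin 1 0 0 z); rewrite !scale1r addr0 => h.
  by move/(congr1 (fun t => t - comp 0 z)): h; rewrite subrr addrK => <-.
have comp0r z : comp z 0 = 0.
  have := proj2 (Hlin 1 0 0 z); rewrite !scale1r addr0 => h.
  by move/(congr1 (fun t => t - comp z 0)): h; rewrite subrr addrK => <-.
have compZl r x z : comp (r *: x) z = r *: comp x z.
  by have := proj1 (Hlin r x 0 z); rewrite !addr0 comp0l addr0 => ->.
have compZr r x z : comp z (r *: x) = r *: comp z x.
  by have := proj2 (Hlin r x 0 z); rewrite !addr0 comp0r addr0 => ->.
have compNl x z : comp (- x) z = - comp x z by rewrite -scaleN1r compZl scaleN1r.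
have compNr x z : comp z (- x) = - comp z x by rewrite -scaleN1r compZr scaleN1r.
have compBl x y z : comp (x - y) z = comp x z - comp y z by rewrite compDl compNl.
have compBr x y z : comp z (x - y) = comp z x - comp z y by rewrite compDr compNr.
have compMnl x z n : comp (x *+ n) z = comp x z *+ n.
  by elim: n => [|n IH]; rewrite ?mulr0n ?comp0l // !mulrS compDl IH.
have compSl (I : finType) (F : I -> V) z : comp (\sum_i F i) z = \sum_i comp (F i) z.
  by rewrite (big_morph (fun x => comp x z) (fun x y => compDl x y z) (comp0l z)).
pose Rb := fun y => comp y b.
pose D := fun y => comp y b - comp b y.
have hlbr n x dx : ~~ odd (absz dx) -> lbr_iter comp x dx b q n = iter n D x.
  elim: n x dx => [|n IH] x dx hx //=.
  by rewrite IH ?ev_add // -iterS iterSr /gbr ksign_ev // scale1r.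
have hdeg n : exists2 m, ~~ odd (absz m) & iter n D a \in hom m.
  elim: n => [|n [m hm hy]]; first by exists p.
  exists (m + q); first exact: ev_add.
  rewrite iterS /D; apply: HD; first exact: Hdeg.
  by rewrite -scaleN1r; apply: HZ; rewrite addrC; apply: Hdeg.
have zm (A B C E : V) : A - B = C - E -> B - E = A - C.
  move/eqP; rewrite subr_eq => /eqP ->.
  by rewrite [C - E + B]addrC -addrA [C - E - C]addrAC subrr add0r.
have hM n x : comp x (iter n D a) = \sum_(i < n.+1)
    (-1) ^+ i *: (iter (n - i) Rb (comp (iter i Rb x) a) *+ 'C(n, i)).
  elim: n x => [|n IH] x.
    by rewrite big_ord_recl big_ord0 /= expr0 scale1r mulr1n addr0.
  have [m hm hy] := hdeg n.
  have key : comp x (D (iter n D a)) = comp (comp x (iter n D a)) b - comp (comp x b) (iter n D a).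
    have := Hpl m q x _ b hy Hb; rewrite ksign_ev // scale1r /D compBr.
    exact: zm.
  rewrite iterS key IH (IH (comp x b)).
  have P := @pascal _ _ (fun k i => iter k Rb (comp (iter i Rb x) a)) n.
  rewrite /= in P; rewrite -P; congr (_ - _).
    rewrite compSl; apply: eq_bigr => i _.
    by rewrite compZl compMnl subSn // -ltnS.
  by apply: eq_bigr => i _; rewrite -iterS iterSr.
have main n : iter n D a = \sum_(i < n.+1)
    (-1) ^+ i *: (iter (n - i) Rb (bpow_comp comp b a i) *+ 'C(n, i)).
  elim: n => [|n IH].
    by rewrite big_ord_recl big_ord0 /= expr0 scale1r mulr1n addr0.
  rewrite iterS; have -> : D (iter n D a) = comp (iter n D a) b - comp b (iter n D a) by [].
  rewrite {1}IH hM.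
  have P := @pascal _ _ (fun k i => iter k Rb (bpow_comp comp b a i)) n.
  rewrite /= in P; rewrite -P; congr (_ - _).
  rewrite compSl; apply: eq_bigr => i _.
  by rewrite compZl compMnl subSn // -ltnS.
by rewrite (hlbr N a p Hp) main.
Qed.
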